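(* Let $S=\langle n_1,n_2\rangle$ be a numerical semigroup with $2\leq n_1<n_2$. Then $S$ is a MANS-semigroup if and only if there exists $a\in\mathbb{N}\setminus\{0\}$ such that $n_2=an_1+1$.
   Context: $\mathbb{N}=\{0,1,2,\ldots\}$. A numerical semigroup is a subset $S\subseteq\mathbb{N}$ closed under addition, containing $0$, with $\mathbb{N}\setminus S$ finite; $\langle A\rangle$ is the submonoid of $(\mathbb{N},+)$ generated by $A$. The multiplicity $\mathrm{m}(S)$ is the least element of $S\setminus\{0\}$. $S$ is a MANS-semigroup if $w(1)<w(2)<\cdots<w(\mathrm{m}(S)-1)$, where $w(i)$ is the least element of $S$ congruent to $i$ modulo $\mathrm{m}(S)$. *)

(* Defs.v *)
From mathcomp Require Import all_boot.
Set Implicit Arguments. Unset Strict Implicit. Unset Printing Implicit Defensive.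

Inductive gen_monoid (A : nat -> Prop) : nat -> Prop :=
  | gen_zero : gen_monoid A 0
  | gen_base x : A x -> gen_monoid A x
  | gen_add x y : gen_monoid A x -> gen_monoid A y -> gen_monoid A (x + y).

Definition numerical_semigroup (S : nat -> Prop) : Prop :=
  S 0 /\ (forall x y, S x -> S y -> S (x + y)) /\
  exists F, forall x, F < x -> S x.

Definition least_in (S : nat -> Prop) (P : nat -> Prop) (x : nat) : Prop :=
  S x /\ P x /\ forall y, S y -> P y -> x <= y.

Definition multiplicity (S : nat -> Prop) (m : nat) : Prop :=
  least_in S (fun x => 0 < x) m.

Definition apery_w (S : nat -> Prop) (m i w : nat) : Prop :=
  least_in S (fun x => x = i %[mod m]) w.

Definition MANS (S : nat -> Prop) : Prop :=
  forall m, multiplicity S m ->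
  forall i wi wi1, 1 <= i -> i.+1 <= m - 1 ->
    apery_w S m i wi -> apery_w S m i.+1 wi1 -> wi < wi1.

(* Main.v *)
Require Import Defs.
From mathcomp Require Import all_boot.
From mathcomp Require Import zify.
From Stdlib Require Import Classical.

Section Aux.
Variables n1 n2 : nat.
Let A := fun x => x = n1 \/ x = n2.

Lemma gen_repr x : gen_monoid A x <-> exists p q, x = p * n1 + q * n2.
Proof.
split.
- elim=> [|y [->|->]|y z _ [p [q ->]] _ [p' [q' ->]]].
  + by exists 0, 0.
  + by exists 1, 0; lia.
  + by exists 0, 1; lia.
  + by exists (p + p'), (q + q'); lia.
- move=> [p [q ->]].
  have H : forall k c, A c -> gen_monoid A (k * c).
    move=> k c Hc; elim: k => [|k IH]; first exact: gen_zero.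
    rewrite mulSn; apply: gen_add => //; exact: gen_base.
  apply: gen_add; apply: H; rewrite /A; auto.
Qed.

Lemma least_uniq S P x y : least_in S P x -> least_in S P y -> x = y.
Proof.
move=> [Sx [Px Hx]] [Sy [Py Hy]]; apply/eqP; rewrite eqn_leq.
by rewrite Hx // Hy.
Qed.

Lemma mult_n1 : 2 <= n1 -> n1 < n2 -> multiplicity (gen_monoid A) n1.
Proof.
move=> h1 h2; split; first by apply/gen_repr; exists 1, 0; lia.
split; first lia.
move=> y /gen_repr [p [q ->]] hy.
case: p hy => [|p] hy.
- case: q hy => [|q] hy; first by lia.
  nia.
- nia.
Qed.

Lemma exists_least (P : nat -> Prop) :
  (exists n, P n) -> exists n, P n /\ forall m, P m -> n <= m.
Proof.
move=> [n Pn]; apply: NNPP => Hno.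
have H : forall k j, j <= k -> ~ P j.
  elim=> [|k IH] j hj Pj.
  - apply: Hno; exists j; split => // m _; lia.
  - case: (leqP j k) => hjk; first exact: IH hjk Pj.
    apply: Hno; exists j; split => // m Pm.
    case: (leqP j m) => // hmj; exfalso; apply: (IH m) => //; lia.
exact: (H n n (leqnn n) Pn).
Qed.

End Aux.

Theorem proposition2p3 (n1 n2 : nat) :
  numerical_semigroup (gen_monoid (fun x => x = n1 \/ x = n2)) ->
  2 <= n1 -> n1 < n2 ->
  (MANS (gen_monoid (fun x => x = n1 \/ x = n2)) <->
   exists a, 0 < a /\ n2 = a * n1 + 1).
Proof.
move=> [_ [_ [F HF]]] h1 h2.
have Hm := @mult_n1 n1 n2 h1 h2.
split.
- move=> HM.
  set r := n2 %% n1.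
  have hr : r < n1 by rewrite /r ltn_mod; lia.
  have Hr1 : r = 1.
    have Hex : forall i, exists w, apery_w (gen_monoid (fun x => x = n1 \/ x = n2)) n1 i w.
      move=> i.
      have hx : F < F.+1 * n1 + i by nia.
      have hP : (F.+1 * n1 + i) = i %[mod n1] by rewrite modnMDl.
      have [w [[Sw Pw] Hw]] := exists_least (fun x => gen_monoid (fun x => x = n1 \/ x = n2) x /\ x = i %[mod n1])
        (ex_intro _ (F.+1 * n1 + i) (conj (HF _ hx) hP)).
      exists w; split => //; split => // y Sy Py; exact: Hw.
    case: (ltnP 1 r) => hr1.
    + have [wi Hwi] := Hex r.-1.
      have [wi1 Hwi1] := Hex r.
      have := HM n1 Hm r.-1 wi wi1 ltac:(lia) ltac:(lia) Hwi.
      rewrite prednK; last lia.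
      move=> /(_ Hwi1) hlt.
      have hle : wi1 <= n2.
        case: Hwi1 => _ [_ H]; apply: H; first by apply: gen_base; right.
        by rewrite /r modn_mod.
      case: Hwi => /gen_repr [p [q Eq]] [Pw _].
      case: q Eq => [|q] Eq; last by nia.
      move: Pw; rewrite Eq addn0 modnMl (modn_small (m := r.-1)); lia.
    + case: (posnP r) => hr0; last lia.
      have hx := HF ((F.+1) * n1 + 1) ltac:(nia).
      move/gen_repr: hx => [p [q Eq]].
      have : ((F.+1) * n1 + 1) %% n1 = (p * n1 + q * n2) %% n1 by rewrite Eq.
      rewrite !modnMDl.
      have -> : (q * n2) %% n1 = 0.
        by apply/eqP; rewrite -/(dvdn _ _) dvdn_mull // /dvdn -/r hr0.
      rewrite modn_small; lia.
  exists (n2 %/ n1); split.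
  + rewrite divn_gt0; lia.
  + by rewrite {1}(divn_eq n2 n1) -/r Hr1.
- move=> [a [ha En2]] m Hmm.
  have -> : m = n1 := @least_uniq _ _ _ _ Hmm Hm.
  have Hw : forall i, i < n1 -> apery_w (gen_monoid (fun x => x = n1 \/ x = n2)) n1 i (i * n2).
    move=> i hi; split.
      apply/gen_repr; by exists 0, i.
    split.
      by rewrite En2 mulnDr muln1 mulnA modnMDl.
    move=> y /gen_repr [p [q ->]].
    have -> : p * n1 + q * n2 = (p + q * a) * n1 + q by rewrite En2; lia.
    rewrite modnMDl (modn_small hi) => hq.
    have : i <= q by rewrite -hq leq_mod.
    move=> hiq; nia.
  move=> i wi wi1 hi1 hi2 Hwi Hwi1.
  rewrite (@least_uniq _ _ _ _ Hwi (Hw i ltac:(lia))) (@least_uniq _ _ _ _ Hwi1 (Hw i.+1 ltac:(lia))).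
  rewrite ltn_pmul2r; lia.
Qed.
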